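(* Let $Q$ be a quadrangulation with a distinguished vertex $s_0$ on its outer face. Then there is a bijection between the $2$-orientations of $Q$ and the strong labelings of $Q$ (with special vertex $s_0$).
   Context: A quadrangulation is a simple plane graph with at least four vertices all of whose faces (including the outer face) are bounded by $4$-cycles; it is bipartite. Color the vertices properly black and white so that $s_0$ is black, and let $s_1$ be the other black vertex on the outer face (the one opposite to $s_0$). An angle is an incidence of a vertex with a face. A strong labeling of $Q$ is a map from the angles of $Q$ to $\{0,1\}$ such that: (G0) all angles at $s_i$ are labeled $i$; (G1) for each vertex $v\notin\{s_0,s_1\}$ the labels around $v$ form one non-empty cyclic interval of $1$s and one non-empty cyclic interval of $0$s; (G2) for each edge, the two labels on the two sides of the edge coincide at one endpoint and differ at the other; (G3) the labels in each bounded face, read cyclically, are $0,0,1,1$, and reading the labels of the outer face in clockwise order starting at $s_0$ they are $0,0,1,1$. A $2$-orientation of $Q$ is an orientation of its edges in which every vertex other than $s_0,s_1$ has outdegree exactly $2$. *)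

(* Defs.v *)
(* Plane graphs are encoded as combinatorial maps (rotation
   systems); planarity is expressed through Euler's formula. *)
From mathcomp Require Import all_boot.
From mathcomp Require Import all_fingroup.
Set Implicit Arguments. Unset Strict Implicit. Unset Printing Implicit Defensive.

Section Maps.
Variables (V D : finType) (tail : D -> V) (alpha sigma : {perm D}).

(* Darts d : D; [tail d] is the vertex d leaves from; [alpha] reverses a dart
   (edge = pair {d, alpha d}); [sigma] is the COUNTERCLOCKWISE successor of a
   dart around its tail vertex.  The face to the LEFT of a dart is traversed by
   [phi d := sigma^-1 (alpha d)]; bounded faces are hence traversed
   counterclockwise and the outer face clockwise. *)
Definition phi (d : D) : D := (sigma^-1)%g (alpha d).

(* Corner (angle) of dart d: the angle at [tail d] between d and [sigma d];
   it lies in the face (phi-orbit) of d. *)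

Definition face_walk (d : D) : seq D := [:: d; phi d; phi (phi d); phi (phi (phi d))].

Definition quadrangulation : Prop :=
  (forall d, alpha (alpha d) = d) /\ (forall d, alpha d <> d) /\
  (forall d, tail (sigma d) = tail d) /\
  (forall d e, tail d = tail e -> exists k, iter k sigma d = e) /\
  (forall v, exists d, tail d = v) /\
  (* simple: no loops, no multiple edges *)
  (forall d, tail (alpha d) <> tail d) /\
  (forall d e, tail d = tail e -> tail (alpha d) = tail (alpha e) -> d = e) /\
  (forall d e, connect [rel x y | (y == sigma x) || (y == alpha x)] d e) /\
  (* plane (genus 0): Euler's formula V - E + F = 2 *)
  (#|V| + fcard phi (@predT D) = #|D|./2 + 2)%N /\
  (4 <= #|V|)%N /\
  (forall d, iter 4 phi d = d /\ uniq (map tail (face_walk d))).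

Variable d0 : D.
(* d0 is the dart of the outer face leaving s0; the outer face is the phi-orbit
   of d0, and s1 is the vertex opposite to s0 on it. *)
Definition s0 : V := tail d0.
Definition s1 : V := tail (phi (phi d0)).
Definition outer (d : D) : Prop := exists k, iter k phi d0 = d.

(* 2-orientations: O is the set of darts oriented forward (one per edge). *)
Definition is_two_orientation (O : {set D}) : Prop :=
  (forall d, (d \in O) = (alpha d \notin O)) /\
  (forall v, v <> s0 -> v <> s1 -> #|[set d in O | tail d == v]| = 2%N).

Definition two_orientation := {O : {set D} | is_two_orientation O}.

(* Strong labelings: labels of angles (= corners = darts) in {0,1},
   encoded as bool (false = 0, true = 1). *)
Definition is_strong_labeling (lab : {ffun D -> bool}) : Prop :=
  (forall d, tail d = s0 -> lab d = false) /\
  (forall d, tail d = s1 -> lab d = true) /\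
  (forall v, v <> s0 -> v <> s1 ->
     exists d k m, [/\ tail d = v, (0 < k)%N, (0 < m)%N,
       (k + m)%N = #|[set e | tail e == v]| &
       [seq lab (iter i sigma d) | i <- iota 0 (k + m)]
         = nseq k true ++ nseq m false]) /\
  (* G2: the two angles at tail d on the two sides of edge {d, alpha d} are
     the corners of (sigma^-1 d) and d *)
  (forall d, (lab d == lab ((sigma^-1)%g d))
              (+) (lab (alpha d) == lab ((sigma^-1)%g (alpha d)))) /\
  (forall d, ~ outer d ->
     exists k, (k < 4)%N /\ rot k (map lab (face_walk d)) = [:: false; false; true; true]) /\
  (* G3, outer face read clockwise from s0 *)
  map lab (face_walk d0) = [:: false; false; true; true].

Definition strong_labeling := {lab : {ffun D -> bool} | is_strong_labeling lab}.

End Maps.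

(* Main.v *)
Require Import Defs.
From mathcomp Require Import all_boot all_fingroup all_algebra zify.
Set Implicit Arguments. Unset Strict Implicit. Unset Printing Implicit Defensive.

Import GRing.Theory.
Local Notation F2 := 'F_2.
Lemma f2_2 : (1 + 1 : F2)%R = 0%R. Proof. by apply/val_inj; vm_compute. Qed.
Lemma f2_cases (x : F2) : x = 0%R \/ x = 1%R.
Proof. case: x => [[|[|n]] H]; [left|right|]; try exact/val_inj. by []. Qed.
Lemma f2_addxx (x : F2) : (x + x = 0)%R.
Proof. by case: (f2_cases x) => ->; rewrite ?addr0 ?f2_2. Qed.
Lemma f2_01 : ((0 : F2) == 1)%R = false. Proof. by rewrite eq_sym oner_eq0. Qed.
Lemma f2_eq1D (x y : F2) : (x + y == 1)%R = (x == 1)%R (+) (y == 1)%R.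
Proof.
by case: (f2_cases x) => ->; case: (f2_cases y) => ->; rewrite ?add0r ?addr0 ?f2_2 ?eqxx ?f2_01.
Qed.
Lemma f2_nat (b : bool) : ((b : nat)%:R == 1 :> F2)%R = b.
Proof. by case: b; rewrite ?eqxx // f2_01. Qed.
Lemma f2_two : (2%:R : F2)%R = 0%R. Proof. exact: f2_2. Qed.

Lemma f2_b (x : F2) : x = ((x == 1)%R : nat)%:R%R.
Proof. by case: (f2_cases x) => ->; rewrite ?eqxx ?f2_01. Qed.
Lemma f2_addb (a b : bool) : ((a : nat)%:R + (b : nat)%:R : F2)%R = ((a (+) b : bool) : nat)%:R%R.
Proof. by case: a; case: b; rewrite /= ?addr0 ?add0r ?f2_2. Qed.
Lemma f2_inj (a b : bool) : ((a : nat)%:R : F2)%R = (b : nat)%:R%R -> a = b.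
Proof. by move/(congr1 (fun x : F2 => (x == 1)%R)); rewrite !f2_nat. Qed.
Lemma f2_B2 (a b c d : F2) : (a + b = 1 + c + d)%R -> (b + d == 1)%R = ~~ (a + c == 1)%R.
Proof.
rewrite [a]f2_b [b]f2_b [c]f2_b [d]f2_b.
move: (a == 1)%R (b == 1)%R (c == 1)%R (d == 1)%R => a' b' c' d'.
rewrite -[1%R]/((true : nat)%:R : F2)%R !f2_addb => /f2_inj.
by rewrite !f2_nat; case: a'; case: b'; case: c'; case: d'.
Qed.

Section Main.
Variables (V D : finType) (tail : D -> V) (alpha sigma : {perm D}) (d0 : D).
Hypothesis HQ : quadrangulation tail alpha sigma.

Local Notation ph := (phi alpha sigma).
Local Notation p2 x := (ph (ph x)).
Local Notation rel := [rel x y | (y == sigma x) || (y == alpha x)].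

Lemma aK d : alpha (alpha d) = d. Proof. by case: HQ. Qed.
Lemma tS d : tail (sigma d) = tail d. Proof. by case: HQ => _ [_ [H _]]. Qed.
Lemma tconn d e : tail d = tail e -> exists k, iter k sigma d = e.
Proof. by case: HQ => _ [_ [_ [H _]]]; apply: H. Qed.
Lemma tsurj v : exists d, tail d = v.
Proof. by case: HQ => _ [_ [_ [_ [H _]]]]. Qed.
Lemma conn d e : connect rel d e.
Proof. by case: HQ => _ [_ [_ [_ [_ [_ [_ [H _]]]]]]]. Qed.
Lemma euler : (#|V| + fcard ph (@predT D) = #|D|./2 + 2)%N.
Proof. by case: HQ => _ [_ [_ [_ [_ [_ [_ [_ [H _]]]]]]]]. Qed.
Lemma V4 : (4 <= #|V|)%N.
Proof. by case: HQ => _ [_ [_ [_ [_ [_ [_ [_ [_ [H _]]]]]]]]]. Qed.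
Lemma faceH d : iter 4 ph d = d /\ uniq (map tail (face_walk alpha sigma d)).
Proof. by case: HQ => _ [_ [_ [_ [_ [_ [_ [_ [_ [_ H]]]]]]]]]. Qed.

Lemma tSV d : tail ((sigma^-1)%g d) = tail d.
Proof. by rewrite -{2}(permKV sigma d) tS. Qed.
Lemma phE d : ph d = (sigma^-1)%g (alpha d). Proof. by []. Qed.
Lemma tph d : tail (ph d) = tail (alpha d). Proof. by rewrite phE tSV. Qed.
Lemma ph4 d : ph (ph (ph (ph d))) = d. Proof. by have [H _] := faceH d. Qed.
Lemma phAS d : ph (alpha (sigma d)) = d. Proof. by rewrite phE aK permK. Qed.
Lemma ph3 d : ph (ph (ph d)) = alpha (sigma d).
Proof. by rewrite -{1}(phAS d) ph4. Qed.
Lemma p2K d : p2 (p2 d) = d. Proof. exact: ph4. Qed.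
Lemma ph_inj : injective ph.
Proof. by move=> x y /(congr1 (fun z => ph (ph (ph z)))); rewrite !ph4. Qed.
Lemma tp2 d : tail (p2 d) <> tail d.
Proof.
have [_ U] := faceH d; move: U; rewrite /face_walk /= !inE.
by case/and4P => /norP [_ /norP [/eqP H _]] _ _ _ E; apply: H; rewrite E.
Qed.
Lemma p2_neq d : p2 d != d.
Proof. by apply/eqP => E; apply: (tp2 (d:=d)); rewrite E. Qed.
Lemma tail_iter k d : tail (iter k sigma d) = tail d.
Proof. by elim: k => //= k IH; rewrite tS. Qed.

Lemma propag (T : eqType) (Y : D -> T) y0 :
  (forall x, Y (sigma x) = Y x) -> (forall x, Y (p2 x) = Y x) ->
  Y d0 = y0 -> Y (alpha d0) = y0 -> forall x, Y x = y0.
Proof.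
move=> YS Y2 Y0 Y1.
have Ya x : Y (ph x) = Y (alpha x) by rewrite phE -{2}(permKV sigma (alpha x)) YS.
pose P d := (Y d == y0) && (Y (alpha d) == y0).
have step x y : rel x y -> P x -> P y.
  rewrite /P /= => /orP [] /eqP -> /andP [/eqP Hx /eqP Hax].
    by rewrite YS Hx -[in Y (alpha (sigma x))]Y2 phAS Ya Hax !eqxx.
  by rewrite aK Hx Hax !eqxx.
move=> x; have: P x.
  have := conn d0 x; case/connectP => p pth ->.
  elim: p d0 pth (introT andP (conj (introT eqP Y0) (introT eqP Y1))) => [|z p IH] x0 //=.
  by case/andP => r pth Px0; apply: IH pth (step _ _ r Px0).
by case/andP => /eqP.
Qed.


Lemma order_ph x : fingraph.order ph x = 4.
Proof.
have [H4 U] := faceH x.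
have U' : uniq (face_walk alpha sigma x) by exact: map_uniq U.
rewrite (@order_cycle _ ph (face_walk alpha sigma x)) //.
  by rewrite /face_walk /= !eqxx /= ph4 eqxx.
by rewrite inE eqxx.
Qed.

Lemma cardD4 : #|D| = (fcard ph (@predT D) * 4)%N.
Proof.
rewrite fcard_order_set //.
  exact: ph_inj.
  by apply/subsetP => x _; rewrite inE /= order_ph.
Qed.

Lemma cardD_V : #|D| = (4 * #|V| - 8)%N.
Proof. have := euler; have := cardD4; have := V4. move=> h1 h2 h3.
have h4: #|D|./2 = (fcard ph (@predT D) * 2)%N.
  by rewrite h2 -[4]/(2*2)%N mulnA muln2 doubleK.
lia.
Qed.

Lemma half_card (S : {set D}) (f : D -> D) :
  (forall x, f (f x) = x) -> (forall x, (x \in S) = (f x \notin S)) ->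
  (#|S| * 2)%N = #|D|.
Proof.
move=> fK HS.
have finj : injective f by apply: can_inj fK.
rewrite -(cardsC S) muln2 -addnn; congr (_ + _).
rewrite -(card_preimset S finj); apply: eq_card => x.
by rewrite !inE HS fK.
Qed.


Definition outd (O : {set D}) v := #|[set d in O | tail d == v]|.

Lemma sum_outd O : (\sum_v outd O v)%N = #|O|.
Proof.
rewrite -sum1_card (partition_big tail predT) //=; apply: eq_bigr => v _.
by rewrite sum1dep_card.
Qed.

Lemma s01 : tail (p2 d0) != tail d0.
Proof. by apply/eqP; apply: tp2. Qed.

Lemma outd0 O : is_two_orientation tail alpha sigma d0 O ->
  outd O (tail d0) = 0%N /\ outd O (tail (p2 d0)) = 0%N.
Proof.
case=> H1 H2.
have hO : (#|O| * 2)%N = #|D| by apply: (half_card (f:=alpha)) => //; apply: aK.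
have hs := sum_outd O.
have hV : (\sum_(v : V) 1)%N = #|V| by rewrite sum1_card cardT enumT.
rewrite (bigD1 (tail d0)) // (bigD1 (tail (p2 d0))) //= ?s01 // in hs.
rewrite (bigD1 (tail d0)) // (bigD1 (tail (p2 d0))) //= ?s01 // in hV.
have e2 : (\sum_(v | (v != tail d0) && (v != tail (p2 d0))) outd O v
          = \sum_(v | (v != tail d0) && (v != tail (p2 d0))) (1 + 1))%N.
  apply: eq_bigr => v /andP [/eqP a /eqP b]; exact: H2.
rewrite e2 big_split /= in hs.
have := cardD_V. set k := (\sum_(i | _) 1)%N in hV hs. clearbody k. move=> hD. have E: (#|O| * 2 = 4 * (1 + (1 + k)) - 8)%N by rewrite hO hD hV. move: E hs; clear. lia.
Qed.


Local Notation ord := (fingraph.order sigma).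

Lemma fcon_tail d e : fconnect sigma d e = (tail e == tail d).
Proof.
apply/idP/eqP.
  by move/iter_findex => <-; rewrite tail_iter.
by move/esym/tconn => [k <-]; apply: fconnect_iter.
Qed.

Lemma ord_card d : ord d = #|[set e | tail e == tail d]|.
Proof. by apply: eq_card => e; rewrite [in RHS]inE -fcon_tail. Qed.

Lemma traject_map (T : Type) (f : T -> T) x n :
  traject f x n = [seq iter i f x | i <- iota 0 n].
Proof.
elim: n => // n IH; rewrite trajectSr IH -addn1 iotaD map_cat /=. by rewrite add0n cats1.
Qed.

Lemma sum_orbit (R : Type) (idx : R) (op : Monoid.com_law idx) (F : D -> R) r :
  \big[op/idx]_(i < ord r) F (iter i sigma r) = \big[op/idx]_(e | tail e == tail r) F e.
Proof.
rewrite -(big_mkord xpredT (fun i => F (iter i sigma r))).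
rewrite -(big_map (fun i => iter i sigma r) xpredT F) -traject_map.
rewrite subn0 big_uniq ?orbit_uniq //; apply: eq_bigl => e.
by rewrite -fconnect_orbit fcon_tail.
Qed.

Lemma iter_ord d : iter (ord d) sigma d = d.
Proof. by apply: iter_order; apply: perm_inj. Qed.

Lemma iter_inj d i j : (i < ord d)%N -> (j < ord d)%N ->
  iter i sigma d = iter j sigma d -> i = j.
Proof. by move=> hi hj E; rewrite -(findex_iter hi) -(findex_iter hj) E. Qed.

Lemma at_vertex d e : tail e = tail d ->
  exists2 i, (i < ord d)%N & e = iter i sigma d.
Proof.
move=> E; have fc : fconnect sigma d e by rewrite fcon_tail E.
by exists (findex sigma d e); [apply: findex_max | rewrite iter_findex].
Qed.

Lemma sigV_iter d i : (0 < i)%N -> (sigma^-1)%g (iter i sigma d) = iter i.-1 sigma d.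
Proof. by case: i => //= i _; rewrite permK. Qed.

Lemma sigV_0 d : (sigma^-1)%g d = iter (ord d).-1 sigma d.
Proof.
have h := iter_ord d; rewrite -(orderSpred sigma d) /= in h.
by rewrite -{1}h permK.
Qed.


Lemma iter_eq d i j : (i < ord d)%N -> (j < ord d)%N ->
  (iter i sigma d == iter j sigma d) = (i == j).
Proof. by move=> hi hj; apply/eqP/eqP => [|-> //]; apply: iter_inj. Qed.

Lemma seq_pat1 (f : nat -> bool) k m :
  [seq f i | i <- iota 0 (k + m)] = nseq k true ++ nseq m false ->
  forall i, (i < k + m)%N -> f i = (i < k)%N.
Proof.
move=> E i hi; have := congr1 (nth false ^~ i) E.
rewrite (nth_map 0%N) ?size_iota // nth_iota // add0n nth_cat size_nseq.
case: ltnP => h; rewrite nth_nseq; first by rewrite h.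
by case: ifP.
Qed.

Lemma seq_pat2 (f : nat -> bool) k m :
  (forall i, (i < k + m)%N -> f i = (i < k)%N) ->
  [seq f i | i <- iota 0 (k + m)] = nseq k true ++ nseq m false.
Proof.
move=> H; apply: (eq_from_nth (x0 := false)).
  by rewrite size_map size_iota size_cat !size_nseq.
move=> i; rewrite size_map size_iota => hi.
rewrite (nth_map 0%N) ?size_iota // nth_iota // add0n nth_cat size_nseq H //.
by case: ltnP => h; rewrite nth_nseq; case: ifP => //; lia.
Qed.

Lemma walk_closed d y : y \in face_walk alpha sigma d -> ph y \in face_walk alpha sigma d.
Proof.
rewrite /face_walk !inE => /or4P [] /eqP ->; rewrite ?eqxx ?orbT //.
by rewrite ph4 eqxx.
Qed.

Lemma iter_walk d k : iter k ph d \in face_walk alpha sigma d.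
Proof.
elim: k => [|k IH] /=; first by rewrite inE eqxx.
exact: walk_closed.
Qed.

Definition strong := is_strong_labeling tail alpha sigma d0.

Lemma strong_p2 (lab : {ffun D -> bool}) : strong lab -> forall x, lab (p2 x) = ~~ lab x.
Proof.
case=> _ [_ [_ [_ [G3 G3o]]]] x.
move: G3o; rewrite /face_walk /= => -[h0 h1 h2 h3].
have [xin | xout] := boolP (x \in face_walk alpha sigma d0).
  move: xin; rewrite /face_walk !inE => /or4P [] /eqP ->.
  - by rewrite h0 h2.
  - by rewrite h1 h3.
  - by rewrite ph4 h0 h2.
  - by rewrite ph4 h1 h3.
have [k [hk]] : exists k, (k < 4)%N /\ rot k (map lab (face_walk alpha sigma x)) = [:: false; false; true; true].
  apply: G3 => -[j hj]; move: xout; rewrite -hj iter_walk //.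
rewrite /face_walk /=.
move: (lab x) (lab (ph x)) (lab (p2 x)) (lab (ph (p2 x))) => a b c e.
case: k hk => [|[|[|[|k]]]] // _; rewrite /rot /=;
  by case: a; case: b; case: c; case: e.
Qed.


Lemma lab_uniq (lab1 lab2 : {ffun D -> bool}) : strong lab1 -> strong lab2 ->
  (forall d, (lab1 d != lab1 ((sigma^-1)%g d)) = (lab2 d != lab2 ((sigma^-1)%g d))) ->
  lab1 = lab2.
Proof.
move=> S1 S2 H; apply/ffunP => x.
pose Y z := lab1 z (+) lab2 z.
have YS z : Y (sigma z) = Y z.
  move: (H (sigma z)); rewrite permK /Y.
  by case: (lab1 (sigma z)); case: (lab1 z); case: (lab2 (sigma z)); case: (lab2 z).
have Y2 z : Y (p2 z) = Y z by rewrite /Y !strong_p2 // addbN addNb negbK.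
have Y0 : Y d0 = false.
  by case: S1 => [A1 _]; case: S2 => [A2 _]; rewrite /Y A1 ?A2.
have Y1 : Y (alpha d0) = false.
  rewrite -[alpha d0](permKV sigma) YS -phE /Y.
  case: S1 => _ [_ [_ [_ [_ ]]]]; case: S2 => _ [_ [_ [_ [_ ]]]].
  by rewrite /face_walk /= => -[_ -> _ _] [_ -> _ _].
have := propag YS Y2 Y0 Y1 x; rewrite /Y.
by case: (lab1 x); case: (lab2 x).
Qed.

Definition Olab (lab : {ffun D -> bool}) : {set D} :=
  [set d | lab d != lab ((sigma^-1)%g d)].

Lemma Olab_two lab : strong lab -> is_two_orientation tail alpha sigma d0 (Olab lab).
Proof.
case=> _ [_ [G1 [G2 _]]]; split.
  move=> d; move: (G2 d); rewrite !inE.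
  by case: (lab d == _); case: (lab (alpha d) == _).
move=> v h0 h1; have [d [k [m [td k0 m0 kmE E]]]] := G1 v h0 h1.
have nE : ord d = (k + m)%N by rewrite ord_card td kmE.
have P := seq_pat1 E.
have kn : (k < ord d)%N by lia.
have -> : [set e in Olab lab | tail e == v] = [set d; iter k sigma d].
  apply/setP => e; rewrite !inE.
  case: (eqVneq (tail e) v) => te; rewrite ?andbT ?andbF.
    have [i hi ->] := at_vertex (etrans te (esym td)).
    have e0 : (iter i sigma d == d) = (i == 0%N).
      by rewrite -[X in _ == X]/(iter 0 sigma d) iter_eq ?order_gt0.
    rewrite e0 iter_eq //.
    case: i hi e0 => [|i] hi _.
      have p0 := P 0%N; have p1 := P (ord d).-1; rewrite /= in p0.
      rewrite /= sigV_0 p0 ?p1 ?nE; lia.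
    rewrite sigV_iter // !P //=; try lia.
  apply/esym/norP; split; apply/eqP => E'; move/eqP: te; apply.
    by rewrite E'.
  by rewrite E' tail_iter.
rewrite cards2; suff : d != iter k sigma d by move=> ->.
rewrite eq_sym -[X in _ != X]/(iter 0 sigma d) iter_eq ?order_gt0 //; lia.
Qed.


Section FromO.
Variables (O : {set D}) (lab : {ffun D -> bool}).
Hypothesis HO : is_two_orientation tail alpha sigma d0 O.
Hypothesis B1 : forall t, lab (sigma t) = lab t (+) (sigma t \in O).
Hypothesis B2 : forall x, lab (p2 x) = ~~ lab x.
Hypothesis B3 : lab d0 = false.
Hypothesis B4 : lab (ph d0) = false.

Lemma const_lab y : outd O (tail y) = 0%N -> forall k, lab (iter k sigma y) = lab y.
Proof.
move=> h; have E := cards0_eq h.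
elim=> // k IH /=; rewrite B1 IH.
suff -> : (sigma (iter k sigma y) \in O) = false by rewrite addbF.
apply/negbTE/negP => hin.
have : sigma (iter k sigma y) \in [set d in O | tail d == tail y].
  by rewrite inE hin tS tail_iter eqxx.
by rewrite E inE.
Qed.

Lemma struct_lab d e : d != e ->
  [set x in O | tail x == tail d] = [set d; e] ->
  forall i, (i < ord d)%N ->
  lab (iter i sigma d) = if (i < findex sigma d e)%N then lab d else ~~ lab d.
Proof.
move=> de S.
have te : tail e = tail d.
  have : e \in [set d; e] by rewrite !inE eqxx orbT.
  by rewrite -S inE => /andP [_ /eqP].
have fc : fconnect sigma d e by rewrite fcon_tail te.
set k := findex sigma d e.
have kn : (k < ord d)%N by apply: findex_max.
have ek : iter k sigma d = e by apply: iter_findex.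
have k0 : k != 0%N by rewrite /k findex_eq0.
have inO j : (0 < j)%N -> (j < ord d)%N -> (iter j sigma d \in O) = (j == k).
  move=> j0 jn.
  have : (iter j sigma d \in [set x in O | tail x == tail d]) = (iter j sigma d \in O).
    by rewrite inE tail_iter eqxx andbT.
  move=> <-; rewrite S !inE -ek iter_eq //.
  rewrite -[X in _ == X]/(iter 0 sigma d) iter_eq ?order_gt0 //.
  by case: j j0 {jn}.
elim=> [|i IH] hi /=.
  by case: k k0 {kn ek inO}.
rewrite B1 IH; last lia.
rewrite [sigma _ \in O](inO i.+1) //.
case: (ltngtP i.+1 k) => h; rewrite ?addbF ?addbT //.
Qed.

Lemma strong_of : strong lab /\ Olab lab = O.
Proof.
have [o0 o1] := outd0 HO.
case: HO => H1 H2.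
split; last first.
  apply/setP => d; rewrite inE -{1}(permKV sigma d) B1 permKV.
  by case: (lab _); case: (d \in O).
split.
  move=> d /esym /tconn [k <-]; by rewrite const_lab.
split.
  move=> d; rewrite /s1 => /esym /tconn [k <-]; by rewrite const_lab // B2 B3.
split.
  move=> v h0 h1.
  have /cards2P [a [b [ab S]]] : #|[set d in O | tail d == v]| == 2 by rewrite H2.
  have tS2 x : x \in [set a; b] -> tail x = v.
    by rewrite -S inE => /andP [_ /eqP].
  have ta : tail a = v by apply: tS2; rewrite !inE eqxx.
  have tb : tail b = v by apply: tS2; rewrite !inE eqxx orbT.
  have Sa : [set x in O | tail x == tail a] = [set a; b] by rewrite ta.
  have Sb : [set x in O | tail x == tail b] = [set b; a] by rewrite tb S setUC.
  have good : forall d e, d != e -> [set x in O | tail x == tail d] = [set d; e] ->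
      lab d -> tail d = v ->
      exists (d : D) (k m : nat),
      [/\ tail d = v, (0 < k)%N, (0 < m)%N,
       (k + m)%N = #|[set e | tail e == v]| &
       [seq lab (iter i sigma d) | i <- iota 0 (k + m)] = nseq k true ++ nseq m false].
    move=> d e de Sd ld td.
    have te : tail e = tail d.
      have : e \in [set d; e] by rewrite !inE eqxx orbT.
      by rewrite -Sd inE => /andP [_ /eqP].
    have fc : fconnect sigma d e by rewrite fcon_tail te.
    have kn := findex_max fc.
    have k0 : findex sigma d e != 0%N by rewrite findex_eq0.
    exists d, (findex sigma d e), (ord d - findex sigma d e)%N; split => //.
    - by rewrite lt0n.
    - by rewrite subn_gt0.
    - by rewrite subnKC ?(ltnW kn) // ord_card td.
    apply: seq_pat2 => i hi; rewrite (struct_lab de Sd); last by lia.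
    by rewrite ld; case: ifP.
  have [la|la] := boolP (lab a); first exact: good ab Sa la ta.
  have fc : fconnect sigma a b by rewrite fcon_tail tb ta.
  have lb : lab b.
    have := struct_lab ab Sa (findex_max fc); rewrite iter_findex // ltnn => ->.
    by [].
  by apply: (good b a); rewrite 1?eq_sym.
split.
  move=> d; rewrite -{1}(permKV sigma d) B1 permKV.
  rewrite -{1}(permKV sigma (alpha d)) B1 permKV H1.
  by case: (lab _); case: (lab _); case: (alpha d \in O).
split.
  move=> d _; rewrite /face_walk /= !B2.
  case: (lab d); case: (lab (ph d)).
  - by exists 2%N.
  - by exists 1%N.
  - by exists 3%N.
  - by exists 0%N.
by rewrite /face_walk /= B2 B2 B3 B4.
Qed.

End FromO.


Section Exist.
Variable (O : {set D}).
Hypothesis HO : is_two_orientation tail alpha sigma d0 O.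
Local Open Scope ring_scope.

Definition oF x : F2 := (x \in O)%:R.
Local Notation rt := (froot sigma).

Lemma outd_even u : ((outd O u)%:R : F2) = 0.
Proof.
have [o0 o1] := outd0 HO; case: HO => _ H2.
have [->|n0] := eqVneq u (tail d0); first by rewrite o0.
have [->|n1] := eqVneq u (tail (p2 d0)); first by rewrite o1.
by rewrite /outd H2 ?f2_two //; apply/eqP.
Qed.

Lemma sum_oF u : \sum_(e | tail e == u) oF e = 0.
Proof.
rewrite /oF -natr_sum -(outd_even u); congr (_%:R).
rewrite big_mkcond /= /outd -sum1dep_card.
rewrite [RHS]big_mkcond /=; apply: eq_bigr => e _.
by case: (e \in O); case: (tail e == u).
Qed.

Lemma cyc_shift (g : nat -> F2) n : g n = g 0%N ->
  \sum_(i < n) g i.+1 = \sum_(i < n) g i.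
Proof.
case: n => [|n] h; first by rewrite !big_ord0.
by rewrite big_ord_recr big_ord_recl /= h addrC.
Qed.

Definition bs x : F2 := \sum_(i < findex sigma (rt x) x) oF (iter i.+1 sigma (rt x)).

Lemma fsym : connect_sym (frel sigma).
Proof. by apply: fconnect_sym; apply: perm_inj. Qed.

Lemma rtS t : rt (sigma t) = rt t.
Proof. by apply/esym/(fingraph.rootP fsym); apply: fconnect1. Qed.

Lemma bs_rec t : bs (sigma t) = bs t + oF (sigma t).
Proof.
rewrite /bs rtS; set r := rt t.
have fc : fconnect sigma r t by rewrite fsym; apply: connect_root.
set k := findex sigma r t.
have kn : (k < ord r)%N by apply: findex_max.
have ek : iter k sigma r = t by apply: iter_findex.
have [kn1|kn1] := ltnP k.+1 (ord r).
  have -> : findex sigma r (sigma t) = k.+1 by rewrite -ek -iterS findex_iter.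
  by rewrite big_ord_recr /= ek.
have kE : k.+1 = ord r by lia.
have -> : sigma t = r by rewrite -ek -iterS kE iter_ord.
rewrite findex0 big_ord0.
have tot : \sum_(i < k.+1) oF (iter i.+1 sigma r) = 0.
  rewrite kE (@cyc_shift (fun i => oF (iter i sigma r)) (ord r)) /= ?iter_ord //.
  by rewrite sum_orbit sum_oF.
move: tot; rewrite big_ord_recr /= -iterS kE iter_ord => ->.
by [].
Qed.

Definition Hs : {set D} := [set x | (enum_rank x < enum_rank (p2 x))%N].

Lemma p2_inj : injective (fun x => p2 x).
Proof. by move=> x y /(congr1 (fun z => p2 z)); rewrite !p2K. Qed.

Lemma Hs_p2 x : (x \in Hs) = (p2 x \notin Hs).
Proof.
rewrite !inE p2K -leqNgt ltn_neqAle.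
have -> : (enum_rank x != enum_rank (p2 x) :> nat) = true.
  apply/negP => /eqP /val_inj /(can_inj enum_rankK) E.
  by move: (p2_neq x); rewrite -E eqxx.
by [].
Qed.

Lemma cardHs : (#|Hs| * 2)%N = #|D|.
Proof. by apply: (half_card (f := fun x => p2 x)) => //; [apply: p2K | apply: Hs_p2]. Qed.

Lemma sumH (g : D -> F2) : \sum_(x in Hs) (g x + g (p2 x)) = \sum_x g x.
Proof.
rewrite big_split /= [RHS](bigID (mem Hs)) /=; congr (_ + _).
rewrite [RHS](reindex_inj p2_inj) /=; apply: eq_bigl => x.
by rewrite Hs_p2.
Qed.

Local Notation nV := #|V|.
Local Notation nH := #|Hs|.
Local Notation ev := enum_val.

Definition cf (c : 'rV[F2]_nV) (v : V) := c 0 (enum_rank v).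

Lemma sum_sel (g : 'I_nV -> F2) a :
  \sum_i g i * (ev i == a)%:R = g (enum_rank a).
Proof.
rewrite (bigD1 (enum_rank a)) //= enum_rankK eqxx mulr1 big1 ?addr0 // => i ne.
suff -> : (ev i == a) = false by rewrite mulr0.
by apply/negbTE; apply: contra ne => /eqP <-; rewrite enum_valK.
Qed.

Definition A0 : 'M[F2]_(nV, nH) :=
  \matrix_(i, j) ((ev i == tail (ev j))%:R + (ev i == tail (p2 (ev j)))%:R).
Definition A1 : 'M[F2]_(nH, nV) :=
  \matrix_(j, k) ((ev k == tail (ph (ev j)))%:R + (ev k == tail (ph (p2 (ev j))))%:R).

Lemma mulA0 c j : (c *m A0) 0 j = cf c (tail (ev j)) + cf c (tail (p2 (ev j))).
Proof.
rewrite !mxE; under eq_bigr do rewrite mxE mulrDr.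
by rewrite big_split /= !sum_sel.
Qed.

Lemma mulA1T c j : (c *m A1^T) 0 j = cf c (tail (ph (ev j))) + cf c (tail (ph (p2 (ev j)))).
Proof.
rewrite !mxE; under eq_bigr do rewrite !mxE mulrDr.
by rewrite big_split /= !sum_sel.
Qed.

Lemma sum_ordH (F : D -> F2) : \sum_(j < nH) F (ev j) = \sum_(x in Hs) F x.
Proof. by rewrite -(big_enum_val (A:=[pred x in Hs]) F). Qed.

Lemma A0A1 : A0 *m A1 = 0.
Proof.
apply/matrixP => i k; rewrite !mxE.
under eq_bigr do rewrite !mxE.
rewrite (sum_ordH (fun x => ((ev i == tail x)%:R + (ev i == tail (p2 x))%:R) *
   ((ev k == tail (ph x))%:R + (ev k == tail (ph (p2 x)))%:R))).
pose g x : F2 := (ev i == tail x)%:R *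
   ((ev k == tail (ph x))%:R + (ev k == tail (ph (p2 x)))%:R).
rewrite (eq_bigr (fun x => g x + g (p2 x))); last first.
  by move=> x _; rewrite /g p2K mulrDl [X in _ + _ * X]addrC.
rewrite (sumH g) /g.
under eq_bigr do rewrite mulrDr.
rewrite big_split /=.
pose G y : F2 := (ev i == tail y)%:R * (ev k == tail (alpha y))%:R.
have e1 : \sum_x (ev i == tail x)%:R * (ev k == tail (ph x))%:R = \sum_x G x :> F2.
  by apply: eq_bigr => x _; rewrite tph.
have e2 : \sum_x (ev i == tail x)%:R * (ev k == tail (ph (p2 x)))%:R = \sum_x G x :> F2.
  rewrite [RHS](reindex_inj (@perm_inj _ sigma)) /=.
  by apply: eq_bigr => x _; rewrite /G ph3 tS.
by rewrite e1 e2 f2_addxx.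
Qed.

Definition beta x : F2 := 1 + bs x + bs (p2 x).
Definition bvec : 'rV[F2]_nH := \row_j beta (ev j).

Lemma beta_p2 x : beta (p2 x) = beta x.
Proof. by rewrite /beta p2K -!addrA [bs x + _]addrC. Qed.

Lemma bvecA1 : bvec *m A1 = 0.
Proof.
apply/rowP => k; rewrite !mxE.
under eq_bigr do rewrite !mxE.
rewrite (sum_ordH (fun x => beta x *
   ((ev k == tail (ph x))%:R + (ev k == tail (ph (p2 x)))%:R))).
pose g x : F2 := beta x * (ev k == tail (ph x))%:R.
rewrite (eq_bigr (fun x => g x + g (p2 x))); last first.
  by move=> x _; rewrite /g beta_p2 mulrDr.
rewrite (sumH g) /g.
pose E x : F2 := (ev k == tail x)%:R.
have e1 : \sum_x beta x * (ev k == tail (ph x))%:R = \sum_x beta (alpha x) * E x.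
  rewrite [LHS](reindex_inj (@perm_inj _ alpha)) /=.
  by apply: eq_bigr => x _; rewrite tph aK.
rewrite e1 /beta.
under eq_bigr do rewrite mulrDl.
rewrite big_split /=.
have e2 : \sum_x bs (p2 (alpha x)) * E x = \sum_x bs (ph x) * E x.
  rewrite [LHS](reindex_inj (@perm_inj _ sigma)) /=.
  by apply: eq_bigr => x _; rewrite /E tS phAS.
rewrite e2 -big_split /=.
rewrite (eq_bigr (fun x => if tail x == ev k then oF x else 0)); last first.
  move=> x _; rewrite -mulrDl /E eq_sym.
  have -> : 1 + bs (alpha x) + bs (ph x) = oF x.
    have -> : alpha x = sigma (ph x) by rewrite phE permKV.
    rewrite bs_rec -addrA [bs (ph x) + _]addrC addrA -(addrA _ _ (bs (ph x))).
    rewrite -addrA f2_addxx addr0 phE permKV /oF.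
    case: HO => H1 _; rewrite (H1 x).
    by case: (alpha x \in O); rewrite /= ?f2_2 ?addr0.
  by case: (tail x == ev k); rewrite ?mulr1 ?mulr0.
by rewrite -big_mkcond sum_oF.
Qed.

Lemma all_p2 (u : 'rV[F2]_nV) :
  (forall x, x \in Hs -> cf u (tail x) = cf u (tail (p2 x))) ->
  forall x, cf u (tail (p2 x)) = cf u (tail x).
Proof.
move=> h x; have [hx|hx] := boolP (x \in Hs); first by rewrite (h x hx).
have hx' : p2 x \in Hs by rewrite Hs_p2 p2K.
by rewrite (h _ hx') p2K.
Qed.

Lemma ker_zero (u : 'rV[F2]_nV) :
  (forall x, cf u (tail (p2 x)) = cf u (tail x)) ->
  cf u (tail d0) = 0 -> cf u (tail (alpha d0)) = 0 -> u = 0.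
Proof.
move=> h h0 h1.
have Y := @propag _ (fun x => cf u (tail x)) 0 (fun x => congr1 _ (tS x)) h h0 h1.
apply/rowP => i; rewrite mxE.
have [d td] := tsurj (ev i).
by have := Y d; rewrite /cf td enum_valK.
Qed.

Definition EV : 'M[F2]_(nV, 2) :=
  \matrix_(i, j) (if j == 0 then (ev i == tail d0)%:R else (ev i == tail (alpha d0))%:R).

Lemma mulEV u j : (u *m EV) 0 j = if j == 0 then cf u (tail d0) else cf u (tail (alpha d0)).
Proof.
rewrite !mxE; under eq_bigr do rewrite mxE.
by case: (j == 0); rewrite sum_sel.
Qed.

Lemma rank_inj p (A : 'M[F2]_(nV, p)) :
  (forall u : 'rV_nV, u *m A = 0 -> u *m EV = 0 -> u = 0) ->
  \rank (kermx A *m EV) = \rank (kermx A).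
Proof.
move=> h; apply/mxrank_injP.
apply/eqP/row_matrixP => i; rewrite row0; apply: h.
  by apply/sub_kermxP; apply: submx_trans (row_sub i _) _; apply: capmxSl.
by apply/sub_kermxP; apply: submx_trans (row_sub i _) _; apply: capmxSr.
Qed.

Lemma f2_sub (a b : F2) : a + b = 0 -> a = b.
Proof. by case: (f2_cases a) => ->; case: (f2_cases b) => ->; rewrite ?addr0 ?add0r ?f2_2 // => /eqP; rewrite ?f2_01 // eq_sym f2_01. Qed.

Lemma inj0 (u : 'rV_nV) : u *m A0 = 0 -> u *m EV = 0 -> u = 0.
Proof.
move=> h0 h1; apply: ker_zero.
- apply: all_p2 => x hx; apply: f2_sub.
  have := congr1 (fun M : 'M[F2]_(1, nH) => M 0 (enum_rank_in hx x : 'I_nH)) h0.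
  by rewrite mulA0 enum_rankK_in // mxE.
- by have := congr1 (fun M : 'M[F2]_(1, 2) => M 0 0) h1; rewrite mulEV eqxx mxE.
- by have := congr1 (fun M : 'M[F2]_(1, 2) => M 0 1) h1; rewrite mulEV /= mxE.
Qed.

Lemma inj1 (u : 'rV_nV) : u *m A1^T = 0 -> u *m EV = 0 -> u = 0.
Proof.
move=> h0 h1; apply: ker_zero.
- have h x : x \in Hs -> cf u (tail (ph x)) = cf u (tail (ph (p2 x))).
    move=> hx; apply: f2_sub.
    have := congr1 (fun M : 'M[F2]_(1, nH) => M 0 (enum_rank_in hx x : 'I_nH)) h0.
    by rewrite mulA1T enum_rankK_in // mxE.
  have h' x : cf u (tail (ph (p2 x))) = cf u (tail (ph x)).
    have [hx|hx] := boolP (x \in Hs); first by rewrite (h x hx).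
    have hx' : p2 x \in Hs by rewrite Hs_p2 p2K.
    by rewrite (h _ hx') p2K.
  by move=> y; have := h' (ph (ph (ph y))); rewrite !ph4.
- by have := congr1 (fun M : 'M[F2]_(1, 2) => M 0 0) h1; rewrite mulEV eqxx mxE.
- by have := congr1 (fun M : 'M[F2]_(1, 2) => M 0 1) h1; rewrite mulEV /= mxE.
Qed.

Lemma cfD (a b : 'rV[F2]_nV) v : cf (a + b) v = cf a v + cf b v.
Proof. by rewrite /cf mxE. Qed.

Lemma exists_c : exists c : 'rV[F2]_nV,
  [/\ forall x, cf c (tail x) + cf c (tail (p2 x)) = beta x,
      cf c (tail d0) = bs d0 & cf c (tail (alpha d0)) = bs (ph d0)].
Proof.
have k0 := rank_inj inj0; rewrite mxrank_ker in k0.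
have k1 := rank_inj inj1; rewrite mxrank_ker mxrank_tr in k1.
have c0 := rank_leq_col (kermx A0 *m EV); rewrite k0 in c0.
have c1 := rank_leq_col (kermx A1^T *m EV); rewrite k1 in c1.
have l0 := rank_leq_row A0.
have l1 := rank_leq_row A1.
have sub : (A0 <= kermx A1)%MS by apply/sub_kermxP; exact: A0A1.
have rs := mxrankS sub; rewrite mxrank_ker in rs.
have nH2 : (nH * 2 = 4 * nV - 8)%N by rewrite cardHs cardD_V.
have v4 := V4.
have eqr : \rank A0 = \rank (kermx A1) by rewrite mxrank_ker; lia.
have sub2 : (kermx A1 <= A0)%MS.
  by have := (mxrank_leqif_eq sub).2; rewrite eqr eqxx => /esym /andP [].
have hb : (bvec <= A0)%MS.
  by apply: submx_trans sub2; apply/sub_kermxP; exact: bvecA1.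
case/submxP: hb => c1' hc1.
have full : row_full (kermx A0 *m EV) by rewrite -col_leq_rank k0; lia.
pose t : 'rV[F2]_2 := \row_j (if j == 0 then cf c1' (tail d0) + bs d0
                               else cf c1' (tail (alpha d0)) + bs (ph d0)).
have /submxP [w hw] : (t <= kermx A0 *m EV)%MS by apply: submx_full.
pose kap := w *m kermx A0.
have kA : kap *m A0 = 0 by rewrite /kap -mulmxA mulmx_ker mulmx0.
have kE : kap *m EV = t by rewrite /kap -mulmxA hw.
have kv j : cf kap (if j == 0 then tail d0 else tail (alpha d0)) = t 0 j.
  by rewrite -kE mulEV; case: (j == 0).
exists (c1' + kap); split.
- have hc : (c1' + kap) *m A0 = bvec by rewrite mulmxDl kA addr0 hc1.
  have hx x : x \in Hs -> cf (c1' + kap) (tail x) + cf (c1' + kap) (tail (p2 x)) = beta x.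
    move=> xH.
    have := congr1 (fun M : 'M[F2]_(1, nH) => M 0 (enum_rank_in xH x : 'I_nH)) hc.
    by rewrite mulA0 mxE enum_rankK_in.
  move=> x; have [xH|xH] := boolP (x \in Hs); first exact: hx.
  have xH' : p2 x \in Hs by rewrite Hs_p2 p2K.
  by rewrite -beta_p2 -(hx _ xH') p2K addrC.
- have := kv 0; rewrite eqxx mxE eqxx cfD => ->.
  by rewrite addrA f2_addxx add0r.
- have := kv 1; rewrite /= mxE /= cfD => ->.
  by rewrite addrA f2_addxx add0r.
Qed.

Lemma exists_lab : exists lab : {ffun D -> bool}, strong lab /\ Olab lab = O.
Proof.
have [c [hc h0 h1]] := exists_c.
pose labF x := cf c (tail x) + bs x.
pose lab := [ffun x => labF x == 1].
exists lab; apply: (strong_of HO).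
- move=> t; rewrite !ffunE /labF tS bs_rec addrA !f2_eq1D /oF f2_nat.
  by [].
- move=> x; rewrite !ffunE /labF; apply: f2_B2.
  by rewrite hc.
- by rewrite ffunE /labF h0 f2_addxx f2_01.
- by rewrite ffunE /labF tph h1 f2_addxx f2_01.
Qed.

End Exist.

End Main.

From Stdlib Require Import ClassicalEpsilon ProofIrrelevance.

Theorem corollary24 (V D : finType) (tail : D -> V) (alpha sigma : {perm D})
  (d0 : D) (HQ : quadrangulation tail alpha sigma) :
  exists f : two_orientation tail alpha sigma d0 ->
             strong_labeling tail alpha sigma d0,
    bijective f.
Proof.
pose g (l : strong_labeling tail alpha sigma d0) : two_orientation tail alpha sigma d0 :=
  exist _ (Olab sigma (proj1_sig l)) (Olab_two HQ (proj2_sig l)).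
pose pick (O : two_orientation tail alpha sigma d0) :=
  constructive_indefinite_description _ (exists_lab HQ (proj2_sig O)).
pose f (O : two_orientation tail alpha sigma d0) : strong_labeling tail alpha sigma d0 :=
  exist _ (proj1_sig (pick O)) (proj1 (proj2_sig (pick O))).
exists f; exists g.
- move=> O; apply: eq_sig_hprop => [x p q|]; first exact: proof_irrelevance.
  by rewrite /= (proj2 (proj2_sig (pick O))).
- move=> l; apply: eq_sig_hprop => [x p q|]; first exact: proof_irrelevance.
  rewrite /=; apply: (lab_uniq HQ) => //; first exact: (proj1 (proj2_sig (pick _))).
    exact: (proj2_sig l).
  move=> d; have E := proj2 (proj2_sig (pick (g l))).
  have := congr1 (fun S : {set D} => d \in S) E.
  by rewrite /= !inE.
Qed.
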